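(* Let $\alpha,\beta,\gamma,\delta\in\mathbb{R}$ with $\alpha+\delta\neq 0$ and $\alpha\gamma=0$, and let $G_7$ be the connected, simply connected Lie group whose Lie algebra $\mathfrak{g}_7$ has a basis $\{e_1,e_2,e_3\}$ with $[e_1,e_2]=-\alpha e_1-\beta e_2-\beta e_3$, $[e_1,e_3]=\alpha e_1+\beta e_2+\beta e_3$, $[e_2,e_3]=\gamma e_1+\delta e_2+\delta e_3$, equipped with the left-invariant Lorentzian metric $g$ for which $\{e_1,e_2,e_3\}$ is pseudo-orthonormal with $e_3$ timelike, and with the product structure $J$. Let $\lambda_0,c\in\mathbb{R}$. Then there exists a derivation $D$ of $\mathfrak{g}_7$ with $\widetilde{\mathrm{Ric}}^0=(s^0\lambda_0+c)\mathrm{Id}+D$ (i.e. $(G_7,g,J)$ is an algebraic Schouten soliton associated to the canonical connection $\nabla^0$) if and only if one of the following holds: (i) $\alpha=\gamma=0$, $\delta\neq0$ and $c=0$; (ii) $\alpha\neq0$, $\beta=\gamma=0$, $\alpha+\delta\neq0$ and $c=-\frac12\alpha^2+2\alpha^2\lambda_0$.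
   Context: Pseudo-orthonormal means $g(e_1,e_1)=g(e_2,e_2)=1$, $g(e_3,e_3)=-1$, $g(e_i,e_j)=0$ for $i\neq j$; left-invariant tensors are identified with their values on $\mathfrak{g}$. $\nabla$ is the Levi-Civita connection of $g$. The product structure $J$ is the left-invariant endomorphism with $Je_1=e_1$, $Je_2=e_2$, $Je_3=-e_3$. The canonical connection is $\nabla^0_XY=\nabla_XY-\frac12(\nabla_XJ)JY$, and the Kobayashi–Nomizu connection is $\nabla^1_XY=\nabla^0_XY-\frac14[(\nabla_YJ)JX-(\nabla_{JY}J)X]$. For $k=0,1$: $R^k(X,Y)Z=\nabla^k_X\nabla^k_YZ-\nabla^k_Y\nabla^k_XZ-\nabla^k_{[X,Y]}Z$; $\rho^k(X,Y)=-g(R^k(X,e_1)Y,e_1)-g(R^k(X,e_2)Y,e_2)+g(R^k(X,e_3)Y,e_3)$; $\widetilde\rho^k(X,Y)=\frac12(\rho^k(X,Y)+\rho^k(Y,X))$; $\widetilde{\mathrm{Ric}}^k$ is defined by $\widetilde\rho^k(X,Y)=g(\widetilde{\mathrm{Ric}}^k(X),Y)$; and $s^k=\widetilde\rho^k(e_1,e_1)+\widetilde\rho^k(e_2,e_2)-\widetilde\rho^k(e_3,e_3)$. A derivation of $\mathfrak{g}$ is a linear map $D$ with $D[X,Y]=[DX,Y]+[X,DY]$. $(G,g,J)$ is an algebraic Schouten soliton associated to $\nabla^k$ (with real constants $\lambda_0,c$) if $\widetilde{\mathrm{Ric}}^k=(s^k\lambda_0+c)\mathrm{Id}+D$ for some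 derivation $D$. *)

(* Defs.v *)
From HB Require Import structures.
From mathcomp Require Import all_boot all_order all_algebra.
From mathcomp Require Import reals.
Set Implicit Arguments. Unset Strict Implicit. Unset Printing Implicit Defensive.
Import Order.TTheory GRing.Theory Num.Theory.
Local Open Scope ring_scope.

(* Three-dimensional real Lie algebra g = R^3, elements are row vectors
   'rV[R]_3 written in the basis {e_1,e_2,e_3} = {e 0, e 1, e 2}.
   Left-invariant tensors are identified with their values on g.
   Linear endomorphisms of g are matrices M acting by  X |-> X *m M. *)

Section Schouten.
Variable R : realType.
Notation vec := 'rV[R]_3.

Definition e (i : 'I_3) : vec := delta_mx 0 i.
Definition coord (x : vec) (i : 'I_3) : R := x 0 i.

Definition eps (i : 'I_3) : R := if (i : nat) == 2%N then -1 else 1.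

Definition gm (x y : vec) : R := \sum_(i < 3) eps i * coord x i * coord y i.

Definition bracket_of (b : 'I_3 -> 'I_3 -> vec) (x y : vec) : vec :=
  \sum_(i < 3) \sum_(j < 3) (coord x i * coord y j) *: b i j.

(* Levi-Civita connection of a left-invariant metric (Koszul formula):
   g(nabla_X Y, Z) = 1/2 (g([X,Y],Z) - g([Y,Z],X) + g([Z,X],Y)) *)
Definition nablaLC (br : vec -> vec -> vec) (X Y : vec) : vec :=
  \sum_(k < 3) (eps k * (2^-1 * (gm (br X Y) (e k) - gm (br Y (e k)) X
                                 + gm (br (e k) X) Y))) *: e k.

Definition Jp (x : vec) : vec := \row_(i < 3) (eps i * coord x i).

Definition nablaJ br (X Y : vec) : vec :=
  nablaLC br X (Jp Y) - Jp (nablaLC br X Y).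

Definition nabla0 br (X Y : vec) : vec :=
  nablaLC br X Y - 2^-1 *: nablaJ br X (Jp Y).

Definition curv0 br (X Y Z : vec) : vec :=
  nabla0 br X (nabla0 br Y Z) - nabla0 br Y (nabla0 br X Z)
  - nabla0 br (br X Y) Z.

Definition rho0 br (X Y : vec) : R :=
  - gm (curv0 br X (e 0) Y) (e 0) - gm (curv0 br X (e 1) Y) (e 1)
  + gm (curv0 br X (e 2) Y) (e 2).

Definition rhot0 br (X Y : vec) : R := 2^-1 * (rho0 br X Y + rho0 br Y X).

(* Ricci operator: the unique endomorphism with rhot0(X,Y) = g(Ric X, Y) *)
Definition Ric0 br (X : vec) : vec :=
  \sum_(k < 3) (eps k * rhot0 br X (e k)) *: e k.

Definition scal0 br : R :=
  rhot0 br (e 0) (e 0) + rhot0 br (e 1) (e 1) - rhot0 br (e 2) (e 2).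

Definition is_derivation (br : vec -> vec -> vec) (D : 'M[R]_3) : Prop :=
  forall X Y : vec, br X Y *m D = br (X *m D) Y + br X (Y *m D).

Definition algebraic_schouten_soliton0 br (lambda0 c : R) : Prop :=
  exists D : 'M[R]_3, is_derivation br D /\
    forall X : vec, Ric0 br X = (scal0 br * lambda0 + c) *: X + X *m D.

Definition row3 (a b c : R) : vec := \row_(i < 3) nth 0 [:: a; b; c] i.

Definition g7_basis (al be ga de : R) (i j : 'I_3) : vec :=
  match (i : nat), (j : nat) with
  | 0, 1 => row3 (- al) (- be) (- be)
  | 1, 0 => - row3 (- al) (- be) (- be)
  | 0, 2 => row3 al be be
  | 2, 0 => - row3 al be be
  | 1, 2 => row3 ga de de
  | 2, 1 => - row3 ga de de
  | _, _ => 0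
  end.

Definition g7_bracket (al be ga de : R) : vec -> vec -> vec :=
  bracket_of (g7_basis al be ga de).

End Schouten.

(* Main.v *)
Require Import Defs.
From HB Require Import structures.
From mathcomp Require Import all_boot all_order all_algebra.
From mathcomp Require Import reals ring lra.
Import Order.TTheory GRing.Theory Num.Theory.
Local Open Scope ring_scope.


Notation i0 := (@Ordinal 3 0 isT).
Notation i1 := (@Ordinal 3 1 isT).
Notation i2 := (@Ordinal 3 2 isT).

Lemma sum3 (R : realType) (f : 'I_3 -> R) : \sum_(i < 3) f i = f i0 + f i1 + f i2.
Proof.
rewrite !big_ord_recr big_ord0 /= ?add0r.
by congr (f _ + f _ + f _); apply/val_inj.
Qed.

Lemma sum3v (R : realType) (f : 'I_3 -> 'rV[R]_3) : \sum_(i < 3) f i = f i0 + f i1 + f i2.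
Proof.
rewrite !big_ord_recr big_ord0 /= ?add0r.
by congr (f _ + f _ + f _); apply/val_inj.
Qed.

Lemma row3E (R : realType) (a b c : R) i :
  row3 a b c 0 i = if (i : nat) == 0%N then a else if (i : nat) == 1%N then b else c.
Proof. rewrite mxE; case: i => [[|[|[|]]] Hi] //. Qed.

Lemma vecE (R : realType) (v : 'rV[R]_3) : v = row3 (v 0 i0) (v 0 i1) (v 0 i2).
Proof.
apply/rowP => i; rewrite row3E; case: i => [[|[|[|]]] Hi] //=; by congr (v 0 _); apply/val_inj.
Qed.

Lemma eqv3 (R : realType) (v w : 'rV[R]_3) :
  (v 0 i0 : R) = w 0 i0 -> (v 0 i1 : R) = w 0 i1 -> (v 0 i2 : R) = w 0 i2 -> v = w.
Proof. by move=> h0 h1 h2; rewrite (vecE _ v) (vecE _ w) h0 h1 h2. Qed.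
Lemma two_neq0 (R : realType) : (2 : R) != 0.
Proof. by rewrite pnatr_eq0. Qed.
Lemma o0E : (0 : 'I_3) = i0. Proof. exact: val_inj. Qed.
Lemma o1E : (1 : 'I_3) = i1. Proof. exact: val_inj. Qed.
Lemma o2E : (2 : 'I_3) = i2. Proof. exact: val_inj. Qed.



Lemma brE (R : realType) (al be ga de : R) (X Y : 'rV[R]_3) :
  let p := X 0 i0 * Y 0 i1 - X 0 i1 * Y 0 i0 in
  let q := X 0 i0 * Y 0 i2 - X 0 i2 * Y 0 i0 in
  let r := X 0 i1 * Y 0 i2 - X 0 i2 * Y 0 i1 in
  g7_bracket al be ga de X Y =
  row3 (- al * p + al * q + ga * r) (- be * p + be * q + de * r) (- be * p + be * q + de * r).
Proof.
rewrite /g7_bracket /bracket_of /Defs.coord !sum3v /=.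
apply: eqv3; rewrite !mxE /=; ring.
Qed.

Lemma gmE (R : realType) (X Y : 'rV[R]_3) :
  gm X Y = X 0 i0 * Y 0 i0 + X 0 i1 * Y 0 i1 - X 0 i2 * Y 0 i2.
Proof. rewrite /gm /Defs.coord sum3 /eps /=; ring. Qed.

Lemma JpE (R : realType) (X : 'rV[R]_3) : Jp X = row3 (X 0 i0) (X 0 i1) (- X 0 i2).
Proof. apply: eqv3; rewrite !mxE /Defs.coord /eps /=; ring. Qed.

Lemma e0E (R : realType) : e R i0 = row3 1 0 0. Proof. by apply: eqv3; rewrite !mxE. Qed.
Lemma e1E (R : realType) : e R i1 = row3 0 1 0. Proof. by apply: eqv3; rewrite !mxE. Qed.
Lemma e2E (R : realType) : e R i2 = row3 0 0 1. Proof. by apply: eqv3; rewrite !mxE. Qed.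
Lemma eps0 (R : realType) : eps R i0 = 1. Proof. by []. Qed.
Lemma eps1 (R : realType) : eps R i1 = 1. Proof. by []. Qed.
Lemma eps2 (R : realType) : eps R i2 = -1. Proof. by []. Qed.
Lemma r30 (R : realType) (a b c : R) : row3 a b c 0 i0 = a. Proof. by rewrite mxE. Qed.
Lemma r31 (R : realType) (a b c : R) : row3 a b c 0 i1 = b. Proof. by rewrite mxE. Qed.
Lemma r32 (R : realType) (a b c : R) : row3 a b c 0 i2 = c. Proof. by rewrite mxE. Qed.
Lemma cD (R : realType) (u v : 'rV[R]_3) i : (u + v) 0 i = u 0 i + v 0 i. Proof. by rewrite mxE. Qed.
Lemma cB (R : realType) (u v : 'rV[R]_3) i : (u - v) 0 i = u 0 i - v 0 i. Proof. by rewrite !mxE. Qed.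
Lemma cN (R : realType) (u : 'rV[R]_3) i : (- u) 0 i = - u 0 i. Proof. by rewrite !mxE. Qed.
Lemma cZ (R : realType) (a : R) (u : 'rV[R]_3) i : (a *: u) 0 i = a * u 0 i. Proof. by rewrite !mxE. Qed.

Lemma LCE (R : realType) (al be ga de : R) (X Y : 'rV[R]_3) :
  let x0 := X 0 i0 in let x1 := X 0 i1 in let x2 := X 0 i2 in
  let y0 := Y 0 i0 in let y1 := Y 0 i1 in let y2 := Y 0 i2 in
  nablaLC (g7_bracket al be ga de) X Y =
  row3 (2^-1 * (- ga*x2*y1 + ga*x1*y2) - be*x2*y2 + be*x2*y1 + be*x1*y2 - be*x1*y1 + al*x0*y2 - al*x0*y1)
       (- de*x2*y2 + de*x1*y2 + 2^-1*(ga*x2*y0 + ga*x0*y2) - be*x2*y0 + be*x1*y0 + al*x0*y0)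
       (- de*x2*y1 + de*x1*y1 + 2^-1*(ga*x1*y0 + ga*x0*y1) - be*x2*y0 + be*x1*y0 + al*x0*y0).
Proof.
move=> x0 x1 x2 y0 y1 y2.
rewrite /nablaLC !sum3v !brE !gmE !e0E !e1E !e2E !eps0 !eps1 !eps2.
apply: eqv3; rewrite !cD !cZ !r30 !r31 !r32 /x0 /x1 /x2 /y0 /y1 /y2. all: by field.
Qed.



Definition wf (R : realType) (al be ga : R) (X : 'rV[R]_3) : R :=
  al * X 0 i0 + be * X 0 i1 + (ga / 2 - be) * X 0 i2.

Arguments wf {R}.
Lemma nabla0E (R : realType) (al be ga de : R) (X Y : 'rV[R]_3) :
  nabla0 (g7_bracket al be ga de) X Y = wf al be ga X *: row3 (- Y 0 i1) (Y 0 i0) 0.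
Proof.
rewrite /nabla0 /nablaJ !JpE !LCE.
apply: eqv3; rewrite /wf !(cB, cZ, cD, cN, r30, r31, r32); by field.
Qed.

Lemma curvE (R : realType) (al be ga de : R) (X Y Z : 'rV[R]_3) :
  curv0 (g7_bracket al be ga de) X Y Z =
  (- wf al be ga (g7_bracket al be ga de X Y)) *: row3 (- Z 0 i1) (Z 0 i0) 0.
Proof.
rewrite /curv0 !nabla0E.
apply: eqv3; rewrite !(cB, cZ, cD, cN, r30, r31, r32); ring.
Qed.


Lemma rho0E' (R : realType) (al be ga de : R) (X Y : 'rV[R]_3) :
  rho0 (g7_bracket al be ga de) X Y =
  - wf al be ga (g7_bracket al be ga de X (e R i0)) * Y 0 i1
  + wf al be ga (g7_bracket al be ga de X (e R i1)) * Y 0 i0.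
Proof.
rewrite /rho0 o2E o1E o0E !curvE !gmE.
rewrite !(cB, cZ, cD, cN, r30, r31, r32) !e0E !e1E ?e2E !(r30, r31, r32); ring.
Qed.

Lemma wbr0 (R : realType) (al be ga de : R) (X : 'rV[R]_3) :
  wf al be ga (g7_bracket al be ga de X (e R i0)) = (X 0 i1 - X 0 i2) * (al ^+ 2 + ga * be / 2).
Proof. rewrite brE e0E /wf !(r30, r31, r32); by field. Qed.

Lemma wbr1 (R : realType) (al be ga de : R) (X : 'rV[R]_3) :
  wf al be ga (g7_bracket al be ga de X (e R i1)) =
  - X 0 i0 * (al ^+ 2 + ga * be / 2) - X 0 i2 * (al * ga + ga * de / 2).
Proof. rewrite brE e1E /wf !(r30, r31, r32); by field. Qed.

Lemma Ric0E (R : realType) (al be ga de : R) (X : 'rV[R]_3) :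
  Ric0 (g7_bracket al be ga de) X =
  row3 (X 0 i0 * (- be * ga / 2 - al ^+ 2) + X 0 i2 * (- ga * de / 4 - al * ga / 2))
       (X 0 i1 * (- be * ga / 2 - al ^+ 2) + X 0 i2 * (be * ga / 4 + al ^+ 2 / 2))
       (X 0 i0 * (ga * de / 4 + al * ga / 2) + X 0 i1 * (- be * ga / 4 - al ^+ 2 / 2)).
Proof.
rewrite /Ric0 /rhot0 sum3v !rho0E' !wbr0 !wbr1 !eps0 !eps1 !eps2 !e0E !e1E !e2E.
apply: eqv3; rewrite !(cB, cZ, cD, cN, r30, r31, r32); by field.
Qed.

Lemma scal0E (R : realType) (al be ga de : R) :
  scal0 (g7_bracket al be ga de) = - be * ga - 2 * al ^+ 2.
Proof.
rewrite /scal0 /rhot0 o2E o1E o0E !rho0E' !wbr0 !wbr1 !e0E !e1E !e2E.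
rewrite !(cB, cZ, cD, cN, r30, r31, r32); by field.
Qed.



Lemma cc (R : realType) (v w : 'rV[R]_3) i : v = w -> (v 0 i : R) = w 0 i.
Proof. by move=> ->. Qed.

Arguments cc {R v w}.
Lemma deriv_eqs (R : realType) (al be ga de m : R) (D : 'M[R]_3) :
  let br := g7_bracket al be ga de in
  (forall X, X *m D = Ric0 br X - m *: X) -> is_derivation br D ->
  [/\ - be * ga * de / 4 + al * m - al * be * ga / 4 + al ^+ 3 / 2 = 0,
      be * m + be ^+ 2 * ga / 2 + al ^+ 2 * be = 0,
      de * m + be * ga * de / 2 + al * be * ga / 2 + al ^+ 2 * de / 2 = 0 &
      de * m + ga ^+ 2 * de / 4 + be * ga * de / 2 + al * ga ^+ 2 / 2
        + al * be * ga / 2 + al ^+ 2 * de / 2 = 0].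
Proof.
move=> br hX hD.
have h02 := hD (e R i0) (e R i2).
have h12 := hD (e R i1) (e R i2).
rewrite !hX /br !Ric0E !brE !e0E !e1E !e2E in h02 h12.
have a1 := cc i0 h02. have a2 := cc i1 h02.
have a3 := cc i1 h12. have a4 := cc i2 h12.
rewrite !(cB, cZ, cD, cN, r30, r31, r32) in a1 a2 a3 a4.
move/eqP: a1; rewrite -subr_eq0 => /eqP a1.
move/eqP: a2; rewrite -subr_eq0 => /eqP a2.
move/eqP: a3; rewrite -subr_eq0 => /eqP a3.
move/eqP: a4; rewrite -subr_eq0 => /eqP a4.
split; [rewrite -a1 | rewrite -a2 | rewrite -a3 | rewrite -a4]; by field.
Qed.



Lemma cM (R : realType) (X : 'rV[R]_3) (A : 'M[R]_3) j :
  (X *m A) 0 j = X 0 i0 * A i0 j + X 0 i1 * A i1 j + X 0 i2 * A i2 j.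
Proof. by rewrite mxE sum3. Qed.

Definition Dm (R : realType) (al be ga de m : R) : 'M[R]_3 :=
  \matrix_(i < 3, j < 3) (Ric0 (g7_bracket al be ga de) (e R i) - m *: e R i) 0 j.

Arguments Dm {R}.
Lemma DmE (R : realType) (al be ga de m : R) i j :
  Dm al be ga de m i j = (Ric0 (g7_bracket al be ga de) (e R i) - m *: e R i) 0 j.
Proof. by rewrite mxE. Qed.

Lemma DmX (R : realType) (al be ga de m : R) (X : 'rV[R]_3) :
  X *m Dm al be ga de m = Ric0 (g7_bracket al be ga de) X - m *: X.
Proof.
apply: eqv3; rewrite !cM !DmE !Ric0E !e0E !e1E !e2E !(cB, cZ, cD, cN, r30, r31, r32); by field.
Qed.

Theorem theorem4p14 (R : realType) (al be ga de lambda0 c : R) :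
  al + de != 0 -> al * ga = 0 ->
  (algebraic_schouten_soliton0 (g7_bracket al be ga de) lambda0 c <->
   ((al = 0 /\ ga = 0 /\ de != 0 /\ c = 0) \/
    (al != 0 /\ be = 0 /\ ga = 0 /\ al + de != 0 /\
     c = - 2^-1 * al ^+ 2 + 2 * al ^+ 2 * lambda0))).
Proof.
move=> hs hag; rewrite /algebraic_schouten_soliton0 scal0E.
set mu := (- be * ga - 2 * al ^+ 2) * lambda0 + c.
split.
- case=> D [hD hR].
  have hX : forall X, X *m D = Ric0 (g7_bracket al be ga de) X - mu *: X.
    by move=> X; rewrite hR addrAC subrr add0r.
  case: (deriv_eqs _ _ _ _ _ _ _ hX hD) => E1 E2 E3 E4.
  have [a0|an0] := eqVneq al 0.
  + left; subst al.
    have d0 : de != 0 by move: hs; rewrite add0r.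
    have g2 : ga ^+ 2 * de = 0 by lra.
    have g0 : ga = 0.
      by move/eqP: g2; rewrite mulf_eq0 (negbTE d0) orbF expf_eq0 /= => /eqP.
    subst ga.
    have m0 : de * mu = 0 by lra.
    move/eqP: m0; rewrite mulf_eq0 (negbTE d0) /= /mu => /eqP m0.
    split => //; split => //; split => //.
    lra.
  + right.
    have g0 : ga = 0 by move/eqP: hag; rewrite mulf_eq0 (negbTE an0) /= => /eqP.
    subst ga.
    have m1 : mu = - al ^+ 2 / 2 by nra.
    have b0 : be = 0.
      have : be * (al ^+ 2 / 2) = 0 by rewrite m1 in E2; lra.
      move/eqP; rewrite mulf_eq0 mulf_eq0 expf_eq0 /= (negbTE an0) invr_eq0 (negbTE (two_neq0 R)) !orbF.
      by move/eqP.
    split => //; split => //; split => //; split => //.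
    move: m1; rewrite /mu => m1.
    have -> : c = - be * 0 * lambda0 + 2 * al ^+ 2 * lambda0 - al ^+ 2 / 2 by lra.
    rewrite mulr0 mul0r add0r; lra.
- move=> H.
  exists (Dm al be ga de mu); split; last first.
    by move=> X; rewrite DmX addrC subrK.
  move=> X Y; rewrite !DmX !Ric0E !brE.
  case: H => [[a0 [g0 [d0 c0]]] | [an0 [b0 [g0 [_ c0]]]]].
  + have m0 : mu = 0 by rewrite /mu a0 g0 c0; ring.
    rewrite m0 a0 g0; apply: eqv3; rewrite !(cB, cZ, cD, cN, r30, r31, r32); by field.
  + have m0 : mu = - al ^+ 2 / 2 by rewrite /mu b0 g0 c0; field.
    rewrite m0 b0 g0; apply: eqv3; rewrite !(cB, cZ, cD, cN, r30, r31, r32); by field.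
Qed.
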